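(* Let $\mathbf{x}\in\mathbb{R}^d$ and consider the training set $\{(\mathbf{x},1),(-\mathbf{x},-1)\}$ classified by the minimum norm interpolant $g_K$ of the CNTK-GAP kernel $K$ (patch size $q$, $1\le q\le d$), assuming the Gram matrix $H_K$ on $\{\mathbf{x},-\mathbf{x}\}$ is invertible. Then the resulting linear classifier has separating hyperplane $\mathbf{z}^T\mathbf{1}_d=0$, and its margin on the training set equals the difference between the DC components of the two training points, $|f_{dc}(\mathbf{x})-f_{dc}(-\mathbf{x})|$.
   Context: $f_{dc}(\mathbf{x})=\frac{1}{\sqrt d}\sum_{i=1}^d x_i$. The margin of a hyperplane through the origin with unit normal $\mathbf{w}$ separating a point $\mathbf{a}$ (low side) from $\mathbf{b}$ (high side) is $\mathbf{w}^T\mathbf{b}-\mathbf{w}^T\mathbf{a}$. FC-NTK on $\mathbb{R}^q$: $k(\mathbf{u},\mathbf{v})=\frac{1}{\pi}\left(2\mathbf{u}^T\mathbf{v}(\pi-\phi)+\|\mathbf{u}\|\|\mathbf{v}\|\sin\phi\right)$ with $\phi$ the angle between $\mathbf{u},\mathbf{v}$ ($k=0$ if an argument is $0$). CNTK-GAP: $K(\mathbf{z},\mathbf{x})=\frac{1}{d^2}\sum_{i,j=1}^d k(\bar{\mathbf{z}}_i,\bar{\mathbf{x}}_j)$ where $\bar{\mathbf{z}}_i=(z_i,z_{i+1},\dots,z_{i+q-1})^T$ with indices cyclic mod $d$. Minimum norm interpolant: $g_K(\mathbf{z})=(K(\mathbf{z},\mathbf{x}),K(\mathbf{z},-\mathbf{x}))H_K^{-1}(1,-1)^T$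 with $H_K$ the $2\times2$ Gram matrix of $K$ on $(\mathbf{x},-\mathbf{x})$. $\mathbf{1}_d$ is the all-ones vector. *)

(* Defs.v *)
From HB Require Import structures.
From mathcomp Require Import all_boot all_order all_algebra.
From mathcomp Require Import reals trigo.
Set Implicit Arguments. Unset Strict Implicit. Unset Printing Implicit Defensive.
Import Order.TTheory GRing.Theory Num.Theory.
Local Open Scope ring_scope.

Section Defs.
Variable R : realType.

Definition dotv (n : nat) (u v : 'rV[R]_n) : R := \sum_(i < n) u 0 i * v 0 i.
Definition vnorm (n : nat) (u : 'rV[R]_n) : R := Num.sqrt (dotv u u).

Definition vangle (n : nat) (u v : 'rV[R]_n) : R :=
  acos (dotv u v / (vnorm u * vnorm v)).

Definition fc_ntk (q : nat) (u v : 'rV[R]_q) : R :=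
  if (u == 0) || (v == 0) then 0 else
  let phi := vangle u v in
  pi^-1 * (2 * dotv u v * (pi - phi) + vnorm u * vnorm v * sin phi).

Definition cyc (d : nat) (i : 'I_d) (l : nat) : 'I_d :=
  Ordinal (ltn_pmod (i + l) (leq_ltn_trans (leq0n i) (ltn_ord i))).

Definition patch (d q : nat) (z : 'rV[R]_d) (i : 'I_d) : 'rV[R]_q :=
  \row_(l < q) z 0 (cyc i l).

Definition cntk_gap (d q : nat) (z x : 'rV[R]_d) : R :=
  (d%:R ^+ 2)^-1 * \sum_(i < d) \sum_(j < d) fc_ntk (patch q z i) (patch q x j).

Definition train_pt (d : nat) (x : 'rV[R]_d) (i : 'I_2) : 'rV[R]_d :=
  if i == 0 then x else - x.
Definition train_lbl (i : 'I_2) : R := if i == 0 then 1 else -1.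

Definition gram_K (d q : nat) (x : 'rV[R]_d) : 'M[R]_2 :=
  \matrix_(i < 2, j < 2) cntk_gap q (train_pt x i) (train_pt x j).

Definition g_K (d q : nat) (x z : 'rV[R]_d) : R :=
  ((\row_(j < 2) cntk_gap q z (train_pt x j)) *m invmx (gram_K q x)
     *m (\col_(i < 2) train_lbl i)) 0 0.

Definition f_dc (d : nat) (x : 'rV[R]_d) : R :=
  (Num.sqrt d%:R)^-1 * \sum_(i < d) x 0 i.

(* margin of hyperplane with unit normal w separating a (low) from b (high) *)
Definition margin (d : nat) (w a b : 'rV[R]_d) : R := dotv w b - dotv w a.

End Defs.

(* Main.v *)
Require Import Defs.
From HB Require Import structures.
From mathcomp Require Import all_boot all_order all_algebra.
From mathcomp Require Import reals trigo.
From mathcomp Require Import ring lra.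
Import Order.TTheory GRing.Theory Num.Theory.
Local Open Scope ring_scope.

Section Aux.
Variable R : realType.

Lemma dotvNr n (u v : 'rV[R]_n) : dotv u (- v) = - dotv u v.
Proof. rewrite /dotv -sumrN; apply: eq_bigr => i _; rewrite mxE; ring. Qed.

Lemma dotvNl n (u v : 'rV[R]_n) : dotv (- u) v = - dotv u v.
Proof. rewrite /dotv -sumrN; apply: eq_bigr => i _; rewrite mxE; ring. Qed.

Lemma dotv_ge0 n (u : 'rV[R]_n) : 0 <= dotv u u.
Proof. by apply: sumr_ge0 => i _; rewrite -expr2 sqr_ge0. Qed.

Lemma vnormN n (u : 'rV[R]_n) : vnorm (- u) = vnorm u.
Proof. by rewrite /vnorm dotvNl dotvNr opprK. Qed.

Lemma vnorm_sqr n (u : 'rV[R]_n) : vnorm u ^+ 2 = dotv u u.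
Proof. by rewrite /vnorm sqr_sqrtr // dotv_ge0. Qed.

Lemma cs_range n (u v : 'rV[R]_n) :
  -1 <= dotv u v / (vnorm u * vnorm v) <= 1.
Proof.
set a := vnorm u; set b := vnorm v.
have a0 : 0 <= a by rewrite sqrtr_ge0.
have b0 : 0 <= b by rewrite sqrtr_ge0.
have [ab0|abp] := eqVneq (a * b) 0.
  by rewrite ab0 invr0 mulr0 lerN10 ler01.
have abgt : 0 < a * b by rewrite lt_def abp mulr_ge0.
have key : forall e : R, e ^+ 2 = 1 -> e * dotv u v <= a * b.
  move=> e he.
  have H : 0 <= \sum_(i < n) (b * u 0 i - e * a * v 0 i) ^+ 2.
    by apply: sumr_ge0 => i _; rewrite sqr_ge0.
  have E : \sum_(i < n) (b * u 0 i - e * a * v 0 i) ^+ 2 =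
     b ^+ 2 * dotv u u - 2 * e * a * b * dotv u v + e ^+ 2 * a ^+ 2 * dotv v v.
    rewrite /dotv !mulr_sumr -!sumrB -big_split /=.
    apply: eq_bigr => i _; ring.
  rewrite E he -!vnorm_sqr -/a -/b in H.
  have H2 : 0 <= (a * b) * (a * b - e * dotv u v) by nra.
  nra.
have k1 := key 1 (expr1n _ _).
have k2 := key (-1) ltac:(by rewrite sqrrN expr1n).
rewrite ler_pdivlMr ?ler_pdivrMr // mul1r; apply/andP; split; nra.
Qed.

Lemma fc_odd q (u v : 'rV[R]_q) : fc_ntk u v - fc_ntk u (- v) = 2 * dotv u v.
Proof.
rewrite /fc_ntk oppr_eq0.
have [->|u0] /= := eqVneq u 0.
  by rewrite subrr /dotv big1 ?mulr0 // => i _; rewrite mxE mul0r.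
have [->|v0] /= := eqVneq v 0.
  by rewrite subrr /dotv big1 ?mulr0 // => i _; rewrite mxE mulr0.
rewrite /vangle vnormN dotvNr mulNr acosN ?cs_range //.
set phi := acos _.
have -> : sin (pi - phi) = sin phi.
  by rewrite sinB sinpi cospi; ring.
have pi0 : pi != 0 :> R by rewrite gt_eqF // pi_gt0.
move: pi0; generalize (pi : R) => p p0.
by field.
Qed.


Definition S {n} (z : 'rV[R]_n) := \sum_(i < n) z 0 i.

Lemma cyc_inj d l : injective (fun i : 'I_d => cyc i l).
Proof.
move=> i j /(congr1 val) /= /eqP; rewrite eqn_modDr !modn_small //.
by move/eqP => /val_inj.
Qed.

Lemma sum_cyc d l (F : 'I_d -> R) : \sum_(i < d) F (cyc i l) = \sum_i F i.
Proof. by rewrite [RHS](reindex_inj (cyc_inj d l)). Qed.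

Lemma patchN d q (x : 'rV[R]_d) j : patch q (- x) j = - patch q x j.
Proof. by apply/rowP => l; rewrite !mxE. Qed.

Lemma cntk_diff d q (z x : 'rV[R]_d) :
  cntk_gap q z x - cntk_gap q z (- x) =
  (d%:R ^+ 2)^-1 * (2 * q%:R * S z * S x).
Proof.
rewrite /cntk_gap -mulrBr; congr (_ * _).
rewrite -sumrB.
under eq_bigr => i _ do rewrite -sumrB.
under eq_bigr => i _ do under eq_bigr => j _ do rewrite patchN fc_odd.
rewrite /dotv.
under eq_bigr => i _ do rewrite -mulr_sumr.
rewrite -mulr_sumr -!mulrA; congr (_ * _).
under eq_bigr => i _ do rewrite exchange_big.
rewrite exchange_big /=.
under eq_bigr => l _ do rewrite -big_distrlr.
transitivity (\sum_(l < q) S z * S x); last by rewrite sumr_const card_ord mulr_natl.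
apply: eq_bigr => l _.
rewrite /S -(@sum_cyc d l (fun i => z 0 i)) -(@sum_cyc d l (fun i => x 0 i)) /=.
by congr (_ * _); apply: eq_bigr => i _; rewrite mxE.
Qed.


Lemma SN {n} (x : 'rV[R]_n) : S (- x) = - S x.
Proof. by rewrite /S -sumrN; apply: eq_bigr => i _; rewrite mxE. Qed.

Lemma dotv_const {n} (a : R) (z : 'rV[R]_n) : dotv (a *: const_mx 1) z = a * S z.
Proof. by rewrite /dotv /S mulr_sumr; apply: eq_bigr => i _; rewrite !mxE mulr1. Qed.

Lemma g_K_eq d q (x z : 'rV[R]_d) : (0 < d)%N -> (0 < q)%N -> gram_K q x \in unitmx ->
  S x != 0 /\ g_K q x z = S z / S x.
Proof.
move=> hd hq U.
set Dx := cntk_gap q x x - cntk_gap q x (- x).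
set col := \col_(i < 2) train_lbl R i.
have HC : gram_K q x *m col = Dx *: col.
  apply/colP => i; rewrite !mxE !big_ord_recr big_ord0 /= !mxE /train_lbl /train_pt /=.
  case: i => [[|[|//]]] ? /=.
    rewrite /Dx; ring.
  have e2 := cntk_diff _ q (- x) x; have e1 := cntk_diff _ q x x.
  rewrite SN in e2.
  have : cntk_gap q (- x) x - cntk_gap q (- x) (- x) = - Dx.
    rewrite e2 /Dx e1; ring.
  move: (cntk_gap q (- x) x) (cntk_gap q (- x) (- x)) Dx => a b c h; lra.
have colK : invmx (gram_K q x) *m (gram_K q x *m col) = col by rewrite mulKmx.
have Dx0 : Dx != 0.
  apply/eqP => D0; move: colK; rewrite HC D0 scale0r mulmx0 => /colP /(_ 0).
  by rewrite !mxE /train_lbl /= => /eqP; rewrite eq_sym oner_eq0.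
have IC : invmx (gram_K q x) *m col = Dx^-1 *: col.
  by rewrite -{2}colK HC -scalemxAr scalerA mulVf // scale1r.
have gE : g_K q x z = (cntk_gap q z x - cntk_gap q z (- x)) / Dx.
  rewrite /g_K -mulmxA IC !mxE !big_ord_recr big_ord0 /= !mxE /train_lbl /train_pt /=; ring.
have Sx0 : S x != 0.
  by apply: contraNneq Dx0 => Sx0; rewrite /Dx cntk_diff Sx0 !mulr0.
split => //.
rewrite gE /Dx !cntk_diff.
have d0 : d%:R != 0 :> R.
  by rewrite pnatr_eq0 -lt0n.
have q0 : q%:R != 0 :> R.
  by rewrite pnatr_eq0 -lt0n.
by field; rewrite Sx0 d0 q0.
Qed.

End Aux.

Theorem corollary2 (R : realType) (d q : nat) (x : 'rV[R]_d) :
  (0 < q)%N -> (q <= d)%N -> gram_K q x \in unitmx ->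
  exists (w : 'rV[R]_d) (alpha : R),
    w = alpha *: const_mx 1 /\ vnorm w = 1 /\
    exists s : R, 0 < s /\
      (forall z : 'rV[R]_d, g_K q x z = s * dotv w z) /\
      margin w (- x) x = `|f_dc x - f_dc (- x)|.
Proof.
move=> hq hqd U.
have hd : (0 < d)%N by apply: leq_trans hqd.
have [Sx0 _] := g_K_eq _ _ q x x hd hq U.
set sq := Num.sqrt (d%:R : R).
have sqp : 0 < sq by rewrite sqrtr_gt0 ltr0n.
have sq2 : sq ^+ 2 = d%:R by rewrite sqr_sqrtr // ler0n.
set g := Num.sg (S R x).
have g2 : g ^+ 2 = 1 by rewrite /g sqr_sg Sx0.
have g0 : g != 0 by rewrite /g sgr_eq0.
have ax : `|S R x| != 0 by rewrite normr_eq0.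
have gS : g * `|S R x| = S R x by rewrite mulr_sg_norm.
exists ((g / sq) *: const_mx 1), (g / sq); split => //; split.
  rewrite /vnorm dotv_const /S.
  under eq_bigr => i _ do rewrite !mxE mulr1.
  rewrite sumr_const card_ord -mulr_natr -sq2.
  have -> : g / sq * (g / sq * sq ^+ 2) = g ^+ 2 by field; rewrite gt_eqF.
  by rewrite g2 sqrtr1.
exists (sq / `|S R x|); split; first by rewrite divr_gt0 // normr_gt0.
split.
  move=> z; have [_ ->] := g_K_eq _ _ q x z hd hq U.
  rewrite dotv_const -{1}gS.
  rewrite -[in LHS](mul1r (S R z)) -g2.
  by field; rewrite ax g0 gt_eqF.
rewrite /margin !dotv_const /f_dc.
have -> : \sum_(i < d) (- x) 0 i = S R (- x) by [].
rewrite -/(S R x) -/sq SN.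
have ga : g * S R x = `|S R x| by rewrite -{1}gS mulrA -expr2 g2 mul1r.
have -> : sq^-1 * S R x - sq^-1 * - S R x = (2 / sq) * S R x by ring.
have -> : g / sq * S R x - g / sq * - S R x = (2 / sq) * (g * S R x) by ring.
by rewrite ga normrM (ger0_norm (ltW _)) // divr_gt0.
Qed.
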